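(* Let $d\ge 3$ and let $\mathbf X=(X_1,\dots,X_d)$ be a random vector of real-valued random variables on an atomless probability space (no integrability assumed), at least $3$ of whose components are non-degenerate. If a counter-monotonic version $\mathbf X^{\rm ct}$ of $\mathbf X$ exists, then $\mathbf X^{\rm ct}\le_{\rm sm}\mathbf X$.
   Context: A function $\varphi:\mathbb R^d\to\mathbb R$ is supermodular if $\varphi(\mathbf x)+\varphi(\mathbf y)\le\varphi(\mathbf x\wedge\mathbf y)+\varphi(\mathbf x\vee\mathbf y)$ for all $\mathbf x,\mathbf y\in\mathbb R^d$, where $\wedge,\vee$ are componentwise minimum and maximum. An expectation $\mathbb E[V]$ is well-defined if $\mathbb E[\max\{V,0\}]<\infty$ or $\mathbb E[\max\{-V,0\}]<\infty$. For random vectors $\mathbf X,\mathbf Y$ in $\mathbb R^d$, $\mathbf X\le_{\rm sm}\mathbf Y$ means $\mathbb E[\varphi(\mathbf X)]\le\mathbb E[\varphi(\mathbf Y)]$ for all supermodular $\varphi$ such that both expectations are well-defined. A pair $(X,Y)$ is comonotonic if $X=f(Z)$, $Y=g(Z)$ a.s. for some random variable $Z$ and increasing $f,g$, and counter-monotonic if $(X,-Y)$ is comonotonic; a random vector is counter-monotonic if each pair of its components is. A counter-monotonic version of $\mathbf X$ is a counter-monotonic random vector with the same marginal distributions as $\mathbf X$. *)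

(* Defs.v *)
From HB Require Import structures.
From mathcomp Require Import all_boot all_order all_algebra.
From mathcomp Require Import all_classical all_reals all_analysis.
Set Implicit Arguments. Unset Strict Implicit. Unset Printing Implicit Defensive.
Import Order.TTheory GRing.Theory Num.Theory.
Local Open Scope classical_set_scope.
Local Open Scope ring_scope.

Section defs.
Context {d : measure_display} {T : measurableType d} {R : realType}.
Variable P : probability T R.

Definition atomless : Prop :=
  forall A : set T, measurable A -> (0 < P A)%E ->
    exists B : set T, [/\ measurable B, B `<=` A, (0 < P B)%E & (P B < P A)%E].

Definition nondegenerate_rv (X : T -> R) : Prop :=
  ~ exists c : R, P [set w | X w = c] = 1%E.

Definition comonotonic (X Y : T -> R) : Prop :=
  exists Z : T -> R, measurable_fun setT Z /\
  exists f g : R -> R,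
    [/\ {homo f : x y / x <= y}, {homo g : x y / x <= y},
        {ae P, forall w, X w = f (Z w)} & {ae P, forall w, Y w = g (Z w)}].

Definition countermonotonic_pair (X Y : T -> R) : Prop :=
  comonotonic X (fun w => - Y w).

Definition countermonotonic (n : nat) (X : 'I_n -> T -> R) : Prop :=
  forall i j : 'I_n, i != j -> countermonotonic_pair (X i) (X j).

Definition same_marginals (n : nat) (X Y : 'I_n -> T -> R) : Prop :=
  forall (i : 'I_n) (B : set R), measurable B ->
    P (X i @^-1` B) = P (Y i @^-1` B).

Definition expectation_welldef (V : T -> R) : Prop :=
  (\int[P]_w (Num.max (V w) 0)%:E < +oo)%E \/
  (\int[P]_w (Num.max (- V w) 0)%:E < +oo)%E.

End defs.

Definition rvec {T : Type} {R : Type} (n : nat) (X : 'I_n -> T -> R) (w : T)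
  : n.-tuple R := [tuple X i w | i < n].

Definition tmin {R : realType} (n : nat) (x y : n.-tuple R) : n.-tuple R :=
  [tuple Num.min (tnth x i) (tnth y i) | i < n].
Definition tmax {R : realType} (n : nat) (x y : n.-tuple R) : n.-tuple R :=
  [tuple Num.max (tnth x i) (tnth y i) | i < n].

Definition supermodular {R : realType} (n : nat) (phi : n.-tuple R -> R) : Prop :=
  forall x y : n.-tuple R, phi x + phi y <= phi (tmin x y) + phi (tmax x y).

Definition sm_le {d : measure_display} {T : measurableType d} {R : realType}
  (P : probability T R) (n : nat) (X Y : 'I_n -> T -> R) : Prop :=
  forall phi : n.-tuple R -> R,
    measurable_fun setT phi -> supermodular phi ->
    expectation_welldef P (phi \o rvec X) ->
    expectation_welldef P (phi \o rvec Y) ->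
    (\int[P]_w (phi (rvec X w))%:E <= \int[P]_w (phi (rvec Y w))%:E)%E.

(* Main.v *)
Require Import Defs.
From HB Require Import structures.
From mathcomp Require Import all_boot all_order all_algebra.
From mathcomp Require Import all_classical all_reals all_analysis.
From mathcomp Require Import measurable_realfun.
From mathcomp Require Import ring lra.
Import Order.TTheory GRing.Theory Num.Theory.
Local Open Scope classical_set_scope.
Local Open Scope ring_scope.
Section integral_lemmas.
Context {dT : measure_display} {T : measurableType dT} {R : realType}.
Variable P : probability T R.

Definition ppart (r : R) := Num.max r 0.
Definition npart (r : R) := Num.max (- r) 0.

Lemma ppart_ge0 r : 0 <= ppart r. Proof. by rewrite /ppart le_max lexx orbT. Qed.
Lemma npart_ge0 r : 0 <= npart r. Proof. by rewrite /npart le_max lexx orbT. Qed.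

Lemma ppart_le x y : x <= y -> ppart x <= ppart y.
Proof.
move=> h; rewrite /ppart ge_max; apply/andP; split; rewrite le_max ?h //.
by rewrite lexx orbT.
Qed.
Lemma npart_le x y : x <= y -> npart y <= npart x.
Proof. by move=> h; apply: ppart_le; rewrite lerN2. Qed.

Lemma mppart {f : T -> R} : measurable_fun setT f -> measurable_fun setT (fun w => ppart (f w)).
Proof. by move=> mf; apply: (measurable_maxr mf (measurable_cst _)). Qed.
Lemma mnpart {f : T -> R} : measurable_fun setT f -> measurable_fun setT (fun w => npart (f w)).
Proof. by move=> mf; apply: (measurable_maxr (measurable_funN mf) (measurable_cst _)). Qed.
Lemma mEFin {f : T -> R} : measurable_fun setT f -> measurable_fun setT (fun w => (f w)%:E).
Proof. by move=> mf; apply/measurable_EFinP. Qed.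

Lemma integralE_R (f : T -> R) :
  (\int[P]_w (f w)%:E = \int[P]_w (ppart (f w))%:E - \int[P]_w (npart (f w))%:E)%E.
Proof.
rewrite integralE; congr (_ - _)%E; apply: eq_integral => w _.
  by rewrite funeposE /ppart EFin_max.
by rewrite funenegE /npart EFin_max EFinN.
Qed.

Lemma le_integral_ae (f g : T -> R) : measurable_fun setT f -> measurable_fun setT g ->
  {ae P, forall w, f w <= g w} -> (\int[P]_w (f w)%:E <= \int[P]_w (g w)%:E)%E.
Proof.
move=> mf mg fg; rewrite (integralE_R f) (integralE_R g); apply: leeB.
- apply: ae_ge0_le_integral => //.
  + by move=> w _; rewrite lee_fin ppart_ge0.
  + first [exact (mEFin (mppart mf)) | exact (mEFin (mppart mg))].
  + by move=> w _; rewrite lee_fin ppart_ge0.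
  + first [exact (mEFin (mppart mf)) | exact (mEFin (mppart mg))].
  + apply: filterS fg => w fgw _; rewrite lee_fin.
    exact: ppart_le.
- apply: ae_ge0_le_integral => //.
  + by move=> w _; rewrite lee_fin npart_ge0.
  + first [exact (mEFin (mnpart mf)) | exact (mEFin (mnpart mg))].
  + by move=> w _; rewrite lee_fin npart_ge0.
  + first [exact (mEFin (mnpart mf)) | exact (mEFin (mnpart mg))].
  + apply: filterS fg => w fgw _; rewrite lee_fin.
    exact: npart_le.
Qed.

Lemma integralB_ge0 (A B : T -> R) : measurable_fun setT A -> measurable_fun setT B ->
  (forall w, 0 <= A w) -> (forall w, 0 <= B w) ->
  (\int[P]_w (B w)%:E < +oo)%E ->
  (\int[P]_w (A w - B w)%:E = \int[P]_w (A w)%:E - \int[P]_w (B w)%:E)%E.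
Proof.
move=> mA mB A0 B0 Bfin.
have mAB : measurable_fun setT (fun w => A w - B w) by exact: measurable_funB.
rewrite (integralE_R (fun w => A w - B w)).
have e1 : (\int[P]_w ((ppart (A w - B w))%:E + (B w)%:E) = \int[P]_w ((npart (A w - B w))%:E + (A w)%:E))%E.
  apply: eq_integral => w _; rewrite -!EFinD; congr (_%:E); rewrite /ppart /npart.
  by case: leP => h1; case: leP => h2; lra.
move: e1; rewrite !ge0_integralD //.
all: try (by move=> w _; rewrite lee_fin ?ppart_ge0 ?npart_ge0 ?A0 ?B0).
all: try (by apply/mEFin; first [exact: mA | exact: mB | exact: (mppart mAB) | exact: (mnpart mAB)]).
move=> e1.
have nB : (\int[P]_w (npart (A w - B w))%:E <= \int[P]_w (B w)%:E)%E.
  apply: ge0_le_integral => //.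
  all: try (by move=> w _; rewrite lee_fin ?npart_ge0 ?B0).
  all: try (exact (mEFin (mnpart mAB))).
  all: try (exact (mEFin mB)).
  move=> w _; rewrite lee_fin /npart ge_max B0 andbT opprB.
    by rewrite lerBlDr lerDl.
have bfin : (\int[P]_w (B w)%:E)%E \is a fin_num.
  rewrite ge0_fin_numE //; apply: integral_ge0 => w _; by rewrite lee_fin.
have nfin : (\int[P]_w (npart (A w - B w))%:E)%E \is a fin_num.
  rewrite ge0_fin_numE; first exact: le_lt_trans nB Bfin.
  apply: integral_ge0 => w _; by rewrite lee_fin npart_ge0.
set p := (\int[P]_w _)%E in e1 *.
set n := (\int[P]_w (npart _)%:E)%E in e1 nB nfin *.
set b := (\int[P]_w (B _)%:E)%E in e1 nB bfin Bfin *.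
set a := (\int[P]_w (A _)%:E)%E in e1 *.
have -> : p = (n + a - b)%E by rewrite -e1 addeK.
by rewrite addeAC [(n + a - n)%E]addeAC subee // add0e.
Qed.

End integral_lemmas.
Section marg.
Context {dT : measure_display} {T : measurableType dT} {R : realType}.
Variable P : probability T R.

Lemma integral_marg (U V : T -> R) (h : R -> R) :
  measurable_fun setT U -> measurable_fun setT V -> measurable_fun setT h ->
  (forall x, 0 <= h x) ->
  (forall B, measurable B -> P (U @^-1` B) = P (V @^-1` B)) ->
  (\int[P]_w (h (U w))%:E = \int[P]_w (h (V w))%:E)%E.
Proof.
move=> mU mV mh h0 eUV.
have mhE : measurable_fun setT (fun x => (h x)%:E) by apply/measurable_EFinP.
have eU := @ge0_integral_pushforward _ _ _ _ _ _ mU P setT (fun x => (h x)%:E) measurableT mhE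
  (fun x _ => h0 x).
have eV := @ge0_integral_pushforward _ _ _ _ _ _ mV P setT (fun x => (h x)%:E) measurableT mhE
  (fun x _ => h0 x).
rewrite preimage_setT in eU eV.
rewrite -eU -eV; apply: eq_measure_integral => A mA _.
exact: eUV.
Qed.
End marg.
Section tuples.
Context {R : realType} (d : nat) (phi : d.-tuple R -> R) (m : 'I_d -> R).

Definition mt : d.-tuple R := [tuple m i | i < d].
Definition st (i : 'I_d) (t : R) : d.-tuple R := [tuple (if j == i then t else m j) | j < d].
Definition gg i t := phi (st i t) - phi mt.

Lemma st_m i : st i (m i) = mt.
Proof.
apply: eq_from_tnth => j; rewrite !tnth_mktuple.
by case: eqP => // ->.
Qed.

Lemma gg_m i : gg i (m i) = 0.
Proof. by rewrite /gg st_m subrr. Qed.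

Definition xk (x : d.-tuple R) (k : nat) : d.-tuple R :=
  [tuple (if (j < k)%N then tnth x j else m j) | j < d].

Lemma sum_step (G : 'I_d -> R) k (hk : (k < d)%N) :
  \sum_(i < d) (if (i < k.+1)%N then G i else 0) =
  \sum_(i < d) (if (i < k)%N then G i else 0) + G (Ordinal hk).
Proof.
have -> : \sum_(i < d) (if (i < k.+1)%N then G i else 0) =
  \sum_(i < d) ((if (i < k)%N then G i else 0) + (if i == Ordinal hk then G i else 0)).
  apply: eq_bigr => i _; rewrite ltnS leq_eqVlt.
  have -> : (i == Ordinal hk) = (nat_of_ord i == k) by [].
  case: (eqVneq (nat_of_ord i) k) => [ik|ik] /=.
    by rewrite ik ltnn add0r.
  by case: ifP; rewrite addr0.
by rewrite big_split /=; congr (_ + _); rewrite -big_mkcond big_pred1_eq.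
Qed.

Lemma P1 (hsm : supermodular phi) (x : d.-tuple R) :
  (forall j, m j <= tnth x j) \/ (forall j, tnth x j <= m j) ->
  phi mt + \sum_(i < d) gg i (tnth x i) <= phi x.
Proof.
move=> hx.
have key : forall k, (k <= d)%N ->
  phi mt + \sum_(i < d) (if (i < k)%N then gg i (tnth x i) else 0) <= phi (xk x k).
  elim => [|k IH] hk.
    rewrite big1 ?addr0; last by move=> i _.
    have -> : xk x 0 = mt by apply: eq_from_tnth => j; rewrite !tnth_mktuple.
    by [].
  rewrite (sum_step (fun i => gg i (tnth x i)) k hk).
  set i0 := Ordinal hk.
  have IH' := IH (ltnW hk).
  have ltnSE : forall j : 'I_d, (j < k.+1)%N = (j < k)%N || (j == i0).
    by move=> j; rewrite ltnS leq_eqVlt orbC.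
  have ineq : phi (xk x k) + phi (st i0 (tnth x i0)) <= phi (xk x k.+1) + phi mt.
    have [[e1 e2]|[e1 e2]] : (tmin (xk x k) (st i0 (tnth x i0)) = mt /\
                    tmax (xk x k) (st i0 (tnth x i0)) = xk x k.+1) \/
                   (tmin (xk x k) (st i0 (tnth x i0)) = xk x k.+1 /\
                    tmax (xk x k) (st i0 (tnth x i0)) = mt).
      case: hx => hx; [left|right]; split; apply: eq_from_tnth => j;
        rewrite !tnth_mktuple ?ltnSE; have hj := hx j;
        (case: (boolP (j < k)%N) => jk; case: (boolP (j == i0)) => ji /=;
        [ by move: jk; rewrite (eqP ji) ltnn
        | by case: leP => ?; lra
        | by rewrite (eqP ji) in hj *; case: leP => ?; lra
        | by rewrite ?minxx ?maxxx ]).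
    + by move: (hsm (xk x k) (st i0 (tnth x i0))); rewrite e1 e2 => ?; lra.
    + by move: (hsm (xk x k) (st i0 (tnth x i0))); rewrite e1 e2 => ?; lra.
  rewrite /gg; lra.
have := key d (leqnn d).
have -> : xk x d = x by apply: eq_from_tnth => j; rewrite !tnth_mktuple ltn_ord.
by under eq_bigr do rewrite ltn_ord.
Qed.

Lemma P2 (x : d.-tuple R) :
  (forall j j', j != j' -> tnth x j = m j \/ tnth x j' = m j') ->
  phi x = phi mt + \sum_(i < d) gg i (tnth x i) /\
  \sum_(i < d) npart (gg i (tnth x i)) <= ppart (phi mt) + npart (phi x).
Proof.
move=> hx.
have [[i0 hi0]|] := pselect (exists i0, tnth x i0 != m i0).
  have oth : forall j, j != i0 -> tnth x j = m j.
    move=> j ji; case: (hx j i0 ji) => // e; by move: hi0; rewrite e eqxx.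
  have ex : x = st i0 (tnth x i0).
    apply: eq_from_tnth => j; rewrite tnth_mktuple.
    case: eqP => [-> //|/eqP ji]; exact: oth.
  have s1 : forall F : R -> R, F 0 = 0 ->
      \sum_(i < d) F (gg i (tnth x i)) = F (gg i0 (tnth x i0)).
    move=> F F0; rewrite (bigD1 i0) //= big1 ?addr0 // => j ji.
    by rewrite oth // gg_m.
  have s0 := s1 id erefl.
  rewrite s0 (s1 npart); last by rewrite /npart oppr0 maxxx.
  rewrite /gg -ex; split; first by ring.
  rewrite /npart /ppart.
  case: (leP (- (phi x - phi mt)) 0) => h1; case: (leP (phi mt) 0) => h2;
    case: (leP (- phi x) 0) => h3; lra.
move=> nex.
have ex : x = mt.
  apply: eq_from_tnth => j; rewrite tnth_mktuple.
  apply/eqP; apply/negP => /negP h; apply: nex; by exists j.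
have s1 : forall F : R -> R, F 0 = 0 -> \sum_(i < d) F (gg i (tnth x i)) = 0.
  move=> F F0; rewrite big1 // => j _.
  by rewrite ex tnth_mktuple gg_m.
rewrite (s1 id erefl) (s1 npart); last by rewrite /npart oppr0 maxxx.
split; first by rewrite ex addr0.
by apply: addr_ge0; [exact: ppart_ge0 | exact: npart_ge0].
Qed.

End tuples.
Arguments mt {R d}.
Arguments st {R d}.
Arguments gg {R d}.
Arguments P1 {R d}.
Arguments P2 {R d}.
Lemma ppart_npart {R : realType} (r : R) : ppart r - npart r = r.
Proof. by rewrite /ppart /npart; case: (leP r 0) => h1; case: (leP (- r) 0) => h2; lra. Qed.

Section main_ineq.
Context {dT : measure_display} {T : measurableType dT} {R : realType}.
Variable P : probability T R.

Lemma tnth_rvec {d : nat} (Z : 'I_d -> T -> R) w i : tnth (rvec Z w) i = Z i w.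
Proof. by rewrite /rvec tnth_mktuple. Qed.

Lemma mrvec {d : nat} (Z : 'I_d -> T -> R) :
  (forall i, measurable_fun setT (Z i)) -> measurable_fun setT (rvec Z).
Proof.
move=> mZ; apply/measurable_fun_tnthP => i.
have -> : (tnth (T:=R))^~ i \o rvec Z = Z i by apply: funext => w /=; rewrite tnth_rvec.
exact: mZ.
Qed.

Lemma mst {d : nat} (m : 'I_d -> R) i : measurable_fun setT (st m i).
Proof.
apply/measurable_fun_tnthP => j.
have -> : (tnth (T:=R))^~ j \o st m i = if j == i then id else cst (m j).
  by apply: funext => t /=; rewrite tnth_mktuple; case: (j == i).
case: (j == i); [exact: measurable_id | exact: measurable_cst].
Qed.

Lemma mgg {d : nat} (phi : d.-tuple R -> R) (m : 'I_d -> R) i :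
  measurable_fun setT phi -> measurable_fun setT (gg phi m i).
Proof.
move=> mphi.
have -> : gg phi m i = (phi \o st m i) \- cst (phi (mt m)) by [].
apply: measurable_funB; last exact: measurable_cst.
exact (measurableT_comp mphi (mst m i)).
Qed.

Lemma intA {d : nat} (Z : 'I_d -> T -> R) (h : 'I_d -> R -> R) (a : R) :
  (forall i, measurable_fun setT (Z i)) -> (forall i, measurable_fun setT (h i)) ->
  (forall i x, 0 <= h i x) -> 0 <= a ->
  (\int[P]_w (a + \sum_(i < d) h i (Z i w))%:E =
   a%:E + \sum_(i < d) \int[P]_w (h i (Z i w))%:E)%E.
Proof.
move=> mZ mh h0 a0.
have mhZ : forall i, measurable_fun setT (fun w => h i (Z i w)).
  by move=> i; exact (measurableT_comp (mh i) (mZ i)).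
under eq_integral do rewrite EFinD -sumEFin.
rewrite ge0_integralD //.
all: try (by move=> w _; rewrite lee_fin).
all: try (by move=> w _; apply: sume_ge0 => i _; rewrite lee_fin).
all: try exact: measurable_cst.
all: try (by apply: emeasurable_sum => i; apply/measurable_EFinP; exact: mhZ).
rewrite integral_cst //; congr (_ + _)%E.
  rewrite -[RHS]mule1; congr (_ * _)%E; exact: probability_setT.
rewrite ge0_integral_sum //.
all: try (by move=> i; apply/measurable_EFinP; exact: mhZ).
all: try (by move=> i w _; rewrite lee_fin).
Qed.

Lemma main_ineq {d : nat} (phi : d.-tuple R -> R) (m : 'I_d -> R) (X Y : 'I_d -> T -> R) :
  measurable_fun setT phi -> supermodular phi ->
  (forall i, measurable_fun setT (X i)) -> (forall i, measurable_fun setT (Y i)) ->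
  (forall i B, measurable B -> P (Y i @^-1` B) = P (X i @^-1` B)) ->
  {ae P, forall w, forall j j', j != j' -> Y j w = m j \/ Y j' w = m j'} ->
  {ae P, forall w, (forall j, m j <= X j w) \/ (forall j, X j w <= m j)} ->
  expectation_welldef P (phi \o rvec Y) ->
  (\int[P]_w (phi (rvec Y w))%:E <= \int[P]_w (phi (rvec X w))%:E)%E.
Proof.
move=> mphi hsm mX mY marg HY HX wd.
set c := phi (mt m).
pose G i t := gg phi m i t.
have mG : forall i, measurable_fun setT (G i) by move=> i; exact: mgg.
pose Ay w := ppart c + \sum_(i < d) ppart (G i (Y i w)).
pose By w := npart c + \sum_(i < d) npart (G i (Y i w)).
pose Ax w := ppart c + \sum_(i < d) ppart (G i (X i w)).
pose Bx w := npart c + \sum_(i < d) npart (G i (X i w)).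
have mpG : forall i, measurable_fun setT (fun t => ppart (G i t)) by move=> i; exact: mppart.
have mnG : forall i, measurable_fun setT (fun t => npart (G i t)) by move=> i; exact: mnpart.
have msum : forall (Z : 'I_d -> T -> R) (h : 'I_d -> R -> R) a,
    (forall i, measurable_fun setT (Z i)) -> (forall i, measurable_fun setT (h i)) ->
    measurable_fun setT (fun w => a + \sum_(i < d) h i (Z i w)).
  move=> Z h a mZ mh; apply: measurable_funD; first exact: measurable_cst.
  apply: measurable_sum => i; exact (measurableT_comp (mh i) (mZ i)).
have mAy : measurable_fun setT Ay by exact (msum Y (fun i t => ppart (G i t)) (ppart c) mY mpG).
have mBy : measurable_fun setT By by exact (msum Y (fun i t => npart (G i t)) (npart c) mY mnG).
have mAx : measurable_fun setT Ax by exact (msum X (fun i t => ppart (G i t)) (ppart c) mX mpG).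
have mBx : measurable_fun setT Bx by exact (msum X (fun i t => npart (G i t)) (npart c) mX mnG).
have Ay0 : forall w, 0 <= Ay w.
  by move=> w; apply: addr_ge0; [exact: ppart_ge0 | apply: sumr_ge0 => i _; exact: ppart_ge0].
have By0 : forall w, 0 <= By w.
  by move=> w; apply: addr_ge0; [exact: npart_ge0 | apply: sumr_ge0 => i _; exact: npart_ge0].
have Ax0 : forall w, 0 <= Ax w.
  by move=> w; apply: addr_ge0; [exact: ppart_ge0 | apply: sumr_ge0 => i _; exact: ppart_ge0].
have Bx0 : forall w, 0 <= Bx w.
  by move=> w; apply: addr_ge0; [exact: npart_ge0 | apply: sumr_ge0 => i _; exact: npart_ge0].
have eA : (\int[P]_w (Ay w)%:E = \int[P]_w (Ax w)%:E)%E.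
  rewrite /Ay /Ax !(intA _ (fun i t => ppart (G i t))) //; try (by move=> ? ?; exact: ppart_ge0); try exact: ppart_ge0.
  congr (_ + _)%E; apply: eq_bigr => i _.
  exact (integral_marg P (Y i) (X i) (fun t => ppart (G i t)) (mY i) (mX i) (mpG i) (fun x => ppart_ge0 _) (marg i)).
have eB : (\int[P]_w (By w)%:E = \int[P]_w (Bx w)%:E)%E.
  rewrite /By /Bx !(intA _ (fun i t => npart (G i t))) //; try (by move=> ? ?; exact: npart_ge0); try exact: npart_ge0.
  congr (_ + _)%E; apply: eq_bigr => i _.
  exact (integral_marg P (Y i) (X i) (fun t => npart (G i t)) (mY i) (mX i) (mnG i) (fun x => npart_ge0 _) (marg i)).
set U := fun w => phi (rvec Y w).
set V := fun w => phi (rvec X w).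
have mU : measurable_fun setT U by exact (measurableT_comp mphi (mrvec Y mY)).
have mV : measurable_fun setT V by exact (measurableT_comp mphi (mrvec X mX)).
have AB : forall (Z : 'I_d -> T -> R) w,
    ppart c + \sum_(i < d) ppart (G i (Z i w)) - (npart c + \sum_(i < d) npart (G i (Z i w)))
    = c + \sum_(i < d) G i (Z i w).
  move=> Z w; rewrite opprD addrACA -sumrB ppart_npart; congr (_ + _).
  by apply: eq_bigr => i _; rewrite ppart_npart.
have F1 : {ae P, forall w, U w = Ay w - By w}.
  apply: filterS HY => w hw.
  have hw' : forall j j', j != j' -> tnth (rvec Y w) j = m j \/ tnth (rvec Y w) j' = m j'.
    by move=> j j' jj; rewrite !tnth_rvec; exact: hw.
  have [h1 _] := P2 phi m (rvec Y w) hw'.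
  rewrite /U h1 /Ay /By AB; congr (_ + _); apply: eq_bigr => i _; by rewrite tnth_rvec.
have F2 : {ae P, forall w, By w <= npart c + ppart c + npart (U w)}.
  apply: filterS HY => w hw.
  have hw' : forall j j', j != j' -> tnth (rvec Y w) j = m j \/ tnth (rvec Y w) j' = m j'.
    by move=> j j' jj; rewrite !tnth_rvec; exact: hw.
  have [_ h2] := P2 phi m (rvec Y w) hw'.
  rewrite /By -addrA lerD2l; move: h2; rewrite /U.
  by under eq_bigr do rewrite tnth_rvec.
have F3 : {ae P, forall w, Ax w - Bx w <= V w}.
  apply: filterS HX => w hw.
  have h1 := P1 phi m hsm (rvec X w).
  rewrite /V AB; move: h1; under eq_bigr do rewrite tnth_rvec; apply.
  by case: hw => h; [left|right] => j; rewrite tnth_rvec.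
change (\int[P]_w (U w)%:E <= \int[P]_w (V w)%:E)%E.
have [Ufin|Uinf] := pselect (\int[P]_w (npart (U w))%:E < +oo)%E.
  have Byfin : (\int[P]_w (By w)%:E < +oo)%E.
    apply: (@le_lt_trans _ _ (\int[P]_w (npart c + ppart c + npart (U w))%:E)%E).
      apply: ae_ge0_le_integral => //.
      - by move=> w _; rewrite lee_fin.
      - exact/measurable_EFinP.
      - move=> w _; rewrite lee_fin; apply: addr_ge0; last exact: npart_ge0.
        by apply: addr_ge0; [exact: npart_ge0|exact: ppart_ge0].
      - apply/measurable_EFinP; apply: measurable_funD; first exact: measurable_cst.
        exact: mnpart.
      - by apply: filterS F2 => w h _; rewrite lee_fin.
    under eq_integral do rewrite EFinD.
    rewrite ge0_integralD //.
    all: try (by move=> w _; rewrite lee_fin ?npart_ge0 // addr_ge0 // ?npart_ge0 ?ppart_ge0).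
    all: try exact: measurable_cst.
    all: try (exact (mEFin (mnpart mU))).
    rewrite integral_cst //.
    have -> : ((npart c + ppart c)%:E * P [set: T] = (npart c + ppart c)%:E)%E.
      rewrite -[RHS]mule1; congr (_ * _)%E; exact: probability_setT.
    by apply: lte_add_pinfty => //; rewrite ltry.
  have e1 : (\int[P]_w (U w)%:E = \int[P]_w (Ay w - By w)%:E)%E.
    apply: ae_eq_integral => //.
    - exact/measurable_EFinP.
    - apply/measurable_EFinP; exact (measurable_funB mAy mBy).
    - by apply: filterS F1 => w h _; rewrite h.
  rewrite e1 integralB_ge0 // eA eB -integralB_ge0 //; last by rewrite -eB.
  by apply: le_integral_ae => //; exact (measurable_funB mAx mBx).
have Uinf' : (\int[P]_w (npart (U w))%:E = +oo)%E.
  apply/eqP; rewrite -leye_eq leNgt; apply/negP => h; exact: Uinf.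
rewrite integralE_R Uinf' addeNy; exact: leNye.
Qed.

End main_ineq.
Section nul.
Context {dT : measure_display} {T : measurableType dT} {R : realType}.
Variable P : probability T R.

Definition nul (E : T -> Prop) := {ae P, forall w, ~ E w}.

Lemma nulS (E F : T -> Prop) : (forall w, E w -> F w) -> nul F -> nul E.
Proof. by move=> EF; rewrite /nul; apply: filterS => w nF eE; apply: nF; exact: EF. Qed.

Lemma nulU (E F : T -> Prop) : nul E -> nul F -> nul (fun w => E w \/ F w).
Proof.
move=> hE hF; rewrite /nul in hE hF *; apply: filterS2 hE hF => w nE nF [|]; assumption.
Qed.

Lemma nul_bigcup (E : nat -> T -> Prop) : (forall n, nul (E n)) -> nul (fun w => exists n, E n w).
Proof.
move=> hE; rewrite /nul in hE *; have := ae_foralln hE; apply: filterS => w h [n En]; exact: h n En.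
Qed.

Lemma nulP (A : set T) : measurable A -> nul (fun w => A w) <-> P A = 0%E.
Proof.
move=> mA; rewrite /nul -(negligibleP _ mA).
have e : ~` [set w | ~ A w] = A.
  by apply/seteqP; split => w /=; [move/contrapT | move=> Aw nAw; exact: nAw].
split => h.
  rewrite -e; exact: h.
rewrite -e in h; exact: h.
Qed.

Lemma nulT : ~ nul (fun _ => True).
Proof.
move=> h.
have : P setT = 0%E by apply/nulP => //; apply: nulS h.
by rewrite probability_setT => /eqP; rewrite onee_eq0.
Qed.

End nul.
Section dich.
Context {dT : measure_display} {T : measurableType dT} {R : realType}.
Variable P : probability T R.

Lemma Dlemma (U V Z : T -> R) (f g : R -> R) :
  {homo f : x y / x <= y} -> {homo g : x y / x <= y} ->
  {ae P, forall w, U w = f (Z w)} -> {ae P, forall w, - V w = g (Z w)} ->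
  forall a b, nul P (fun w => a < U w /\ b < V w) \/ nul P (fun w => U w <= a /\ V w <= b).
Proof.
move=> hf hg hU hV a b.
have [[z [fz gz]]|nz] := pselect (exists z, a < f z /\ g z < - b).
  right; rewrite /nul; apply: filterS2 hU hV => w eU eV [Ua Vb].
  have [zw|wz] := leP z (Z w).
    have := hf _ _ zw; rewrite -eU => h; lra.
  have := hg _ _ (ltW wz); rewrite -eV => h; lra.
left; rewrite /nul; apply: filterS2 hU hV => w eU eV [Ua Vb].
apply: nz; exists (Z w); rewrite -eU -eV; split => //; lra.
Qed.

Definition Dprop {d : nat} (Y : 'I_d -> T -> R) := forall i j, i != j -> forall a b,
  nul P (fun w => a < Y i w /\ b < Y j w) \/ nul P (fun w => Y i w <= a /\ Y j w <= b).

Lemma D_of_cm {d : nat} (Y : 'I_d -> T -> R) :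
  countermonotonic P Y -> Dprop Y /\ Dprop (fun i w => - Y i w).
Proof.
move=> cm; split => i j ij a b; have [Z [_ [f [g [hf hg hU hV]]]]] := cm i j ij.
  exact: (Dlemma _ _ Z f g).
apply: (Dlemma _ _ (fun w => - Z w) (fun z => - f (- z)) (fun z => - g (- z))).
- by move=> x y xy; rewrite lerN2; apply: hf; rewrite lerN2.
- by move=> x y xy; rewrite lerN2; apply: hg; rewrite lerN2.
- by apply: filterS hU => w ->; rewrite opprK.
- by apply: filterS hV => w hw; rewrite !opprK -hw opprK.
Qed.

End dich.
Section structure.
Context {dT : measure_display} {T : measurableType dT} {R : realType}.
Variable P : probability T R.
Local Notation nul := (nul P).

Lemma nul_andC (E F : T -> Prop) : nul (fun w => E w /\ F w) -> nul (fun w => F w /\ E w).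
Proof. by apply: nulS => w [? ?]. Qed.

Lemma Tlemma {d : nat} (Y : 'I_d -> T -> R) (D : Dprop P Y) x y z
  (xy : x != y) (xz : x != z) (yz : y != z) ax ay az :
  ~ nul (fun w => ay < Y y w) -> ~ nul (fun w => Y z w <= az) ->
  nul (fun w => ax < Y x w /\ ay < Y y w) -> nul (fun w => Y x w <= ax /\ Y z w <= az) -> False.
Proof.
move=> Hy Lz U1 L1.
have U2 := nulU P _ _ U1 L1.
case: (D y z yz ay az) => h.
  apply: Hy; apply: (nulS P _ _ _ (nulU P _ _ U2 h)) => w ayw.
  case: (leP (Y x w) ax) => hx; last by left; left.
  case: (leP (Y z w) az) => hz; first by left; right.
  by right.
apply: Lz; apply: (nulS P _ _ _ (nulU P _ _ U2 h)) => w azw.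
case: (leP (Y x w) ax) => hx; first by left; right.
case: (leP (Y y w) ay) => hy; last by left; left.
by right.
Qed.

Lemma triple_case {d : nat} (Y : 'I_d -> T -> R) (D : Dprop P Y) i j k
  (ij : i != j) (ik : i != k) (jk : j != k) ti tj tk :
  ~ nul (fun w => ti < Y i w) -> ~ nul (fun w => Y i w <= ti) ->
  ~ nul (fun w => tj < Y j w) -> ~ nul (fun w => Y j w <= tj) ->
  ~ nul (fun w => tk < Y k w) -> ~ nul (fun w => Y k w <= tk) ->
  [/\ nul (fun w => ti < Y i w /\ tj < Y j w), nul (fun w => ti < Y i w /\ tk < Y k w)
    & nul (fun w => tj < Y j w /\ tk < Y k w)] \/
  [/\ nul (fun w => Y i w <= ti /\ Y j w <= tj), nul (fun w => Y i w <= ti /\ Y k w <= tk)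
    & nul (fun w => Y j w <= tj /\ Y k w <= tk)].
Proof.
move=> Hi Li Hj Lj Hk Lk.
have ji : j != i by rewrite eq_sym.
have ki : k != i by rewrite eq_sym.
have kj : k != j by rewrite eq_sym.
case: (D i j ij ti tj) => Uij.
  have Uik : nul (fun w => ti < Y i w /\ tk < Y k w).
    case: (D i k ik ti tk) => // Lik; exfalso.
    exact: (Tlemma Y D i j k ij ik jk ti tj tk Hj Lk Uij Lik).
  have Ujk : nul (fun w => tj < Y j w /\ tk < Y k w).
    case: (D j k jk tj tk) => // Ljk; exfalso.
    exact: (Tlemma Y D j i k ji jk ik tj ti tk Hi Lk (nul_andC _ _ Uij) Ljk).
  by left.
have Lik : nul (fun w => Y i w <= ti /\ Y k w <= tk).
  case: (D i k ik ti tk) => // Uik; exfalso.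
  exact: (Tlemma Y D i k j ik ij kj ti tk tj Hk Lj Uik Uij).
have Ljk : nul (fun w => Y j w <= tj /\ Y k w <= tk).
  case: (D j k jk tj tk) => // Ujk; exfalso.
  exact: (Tlemma Y D j k i jk ji ki tj tk ti Hk Li Ujk (nul_andC _ _ Uij)).
by right.
Qed.

Lemma Uglobal {d : nat} (Y : 'I_d -> T -> R) (D : Dprop P Y) (inT : pred 'I_d) (t : 'I_d -> R)
  (pick2 : forall l l', exists y, [/\ inT y, y != l & y != l'])
  (ht : forall x, inT x -> ~ nul (fun w => t x < Y x w) /\ ~ nul (fun w => Y x w <= t x))
  (hU : forall x y, inT x -> inT y -> x != y -> nul (fun w => t x < Y x w /\ t y < Y y w)) :
  forall l l', l != l' -> forall a b, ~ nul (fun w => Y l w <= a) -> ~ nul (fun w => Y l' w <= b) ->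
    nul (fun w => a < Y l w /\ b < Y l' w).
Proof.
have S1 : forall x l a, inT x -> l != x -> ~ nul (fun w => Y l w <= a) ->
    nul (fun w => a < Y l w /\ t x < Y x w).
  move=> x l a Tx lx La.
  have [y [Ty yx yl]] := pick2 x l.
  case: (D l x lx a (t x)) => // Llx; exfalso.
  have xy : x != y by rewrite eq_sym.
  have xl : x != l by rewrite eq_sym.
  have [Hy _] := ht y Ty.
  exact: (Tlemma Y D x y l xy xl yl (t x) (t y) a Hy La (hU x y Tx Ty xy) (nul_andC _ _ Llx)).
move=> l l' ll' a b La Lb.
have [x [Tx xl xl']] := pick2 l l'.
have lx : l != x by rewrite eq_sym.
have U1 := S1 x l a Tx lx La.
case: (D l l' ll' a b) => // Lll'; exfalso.
have [Hx _] := ht x Tx.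
exact: (Tlemma Y D l x l' lx ll' xl' a (t x) b Hx Lb U1 Lll').
Qed.

End structure.
Section reals_helpers.
Context {R : realType}.

Lemma arch (r : R) : exists n : nat, r < n%:R.
Proof.
have h := archi_boundP (normr_ge0 r).
by exists (Num.Def.archi_bound `|r|); exact: le_lt_trans (ler_norm r) h.
Qed.

Definition epsn (n : nat) : R := (n.+1%:R)^-1.

Lemma epsn_gt0 n : 0 < epsn n.
Proof. by rewrite /epsn invr_gt0 ltr0Sn. Qed.

Lemma epsn_small (x : R) : 0 < x -> exists n, epsn n < x.
Proof.
move=> x0; have [n hn] := arch x^-1.
exists n; rewrite /epsn -[x]invrK ltf_pV2 ?posrE ?invr_gt0 ?ltr0Sn //.
by apply: lt_trans hn _; rewrite ltr_nat.
Qed.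

End reals_helpers.
Arguments epsn {R} n.
Arguments epsn_gt0 {R} n.

Section ND.
Context {dT : measure_display} {T : measurableType dT} {R : realType}.
Variable P : probability T R.
Local Notation nul := (nul P).

Lemma ND (Z : T -> R) : measurable_fun setT Z -> nondegenerate_rv P Z ->
  exists t, ~ nul (fun w => Z w < t) /\ ~ nul (fun w => t < Z w).
Proof.
move=> mZ nd; apply: contrapT => H.
have H' : forall t, nul (fun w => Z w < t) \/ nul (fun w => t < Z w).
  move=> t; have [h|h] := pselect (nul (fun w => Z w < t)); first by left.
  have [h'|h'] := pselect (nul (fun w => t < Z w)); first by right.
  by exfalso; apply: H; exists t.
set S := [set t | nul (fun w => Z w < t)].
have Sdown : forall s t, t <= s -> S s -> S t.
  move=> s t ts; apply: nulS => w /= h; exact: lt_le_trans h ts.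
have Sne : S !=set0.
  apply: contrapT => hS.
  have allH : forall t, nul (fun w => t < Z w).
    move=> t; case: (H' t) => // h; exfalso; apply: hS; by exists t.
  apply: (nulT P); apply: (nulS P _ _ _ (nul_bigcup P _ (fun n => allH (- n%:R)))) => w _.
  have [n hn] := arch (- Z w); exists n; by rewrite ltrNl.
have Sub : has_ubound S.
  apply: contrapT => hS.
  have allS : forall t, S t.
    move=> t; apply: contrapT => nSt; apply: hS; exists t => s Ss.
    by apply: contrapT => /negP; rewrite -ltNge => ts; apply: nSt; exact: (Sdown s t (ltW ts)).
  apply: (nulT P); apply: (nulS P _ _ _ (nul_bigcup P _ (fun n => allS n%:R))) => w _.
  exact: arch.
set c := sup S.
have h1 : nul (fun w => Z w < c).
  apply: (nulS P _ _ _ (nul_bigcup P (fun n w => Z w < c - epsn n) _)).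
    move=> w hw; have [n hn] : exists n, epsn n < c - Z w by apply: epsn_small; rewrite subr_gt0.
    by exists n; lra.
  move=> n; have [s Ss hs] := sup_adherent (epsn_gt0 n) (conj Sne Sub).
  exact: (Sdown s _ (ltW hs) Ss).
have h2 : nul (fun w => c < Z w).
  apply: (nulS P _ _ _ (nul_bigcup P (fun n w => c + epsn n < Z w) _)).
    move=> w hw; have [n hn] : exists n, epsn n < Z w - c by apply: epsn_small; rewrite subr_gt0.
    by exists n; lra.
  move=> n; case: (H' (c + epsn n)) => // hS; exfalso.
  have := ub_le_sup Sub hS; rewrite -/c => h.
  have := @epsn_gt0 R n; lra.
have h3 : nul (fun w => (~` (Z @^-1` [set c])) w).
  apply: (nulS P _ (fun w => Z w < c \/ c < Z w)); last exact: (nulU P _ _ h1 h2).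
  move=> w hw; case: (ltgtP (Z w) c) => e; [by left|by right|].
  by exfalso; apply: hw; rewrite /preimage /= e.
have mA : measurable (Z @^-1` [set c]).
  by rewrite -[Z @^-1` _]setTI; apply: mZ.
move/(nulP P _ (measurableC mA)) : h3 => h3.
apply: nd; exists c.
have := probability_setC P (measurableC mA); rewrite setCK h3 sube0 => <-.
by [].
Qed.

End ND.
Section Mlem.
Context {dT : measure_display} {T : measurableType dT} {R : realType}.
Variable P : probability T R.
Local Notation nul := (nul P).

Lemma Mlemma {d : nat} (Y : 'I_d -> T -> R)
  (UG : forall l l', l != l' -> forall a b, ~ nul (fun w => Y l w <= a) ->
     ~ nul (fun w => Y l' w <= b) -> nul (fun w => a < Y l w /\ b < Y l' w))
  (NE : forall l, exists l' s, [/\ l' != l, ~ nul (fun w => s < Y l' w) &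
     ~ nul (fun w => Y l' w <= s)]) :
  exists m : 'I_d -> R, (forall l, nul (fun w => Y l w < m l)) /\
    (forall l l', l != l' -> nul (fun w => m l < Y l w /\ m l' < Y l' w)).
Proof.
pose S l := [set a | ~ nul (fun w => Y l w <= a)].
have Sup : forall l a b, a <= b -> S l a -> S l b.
  move=> l a b ab Sa nb; apply: Sa; apply: (nulS P _ _ _ nb) => w h; exact: le_trans h ab.
have hinf : forall l, has_inf (S l).
  move=> l; split.
    apply: contrapT => hS; apply: (nulT P).
    have allN : forall a, nul (fun w => Y l w <= a).
      by move=> a; apply: contrapT => h; apply: hS; exists a.
    apply: (nulS P _ _ _ (nul_bigcup P _ (fun n => allN n%:R))) => w _.
    by have [n hn] := arch (Y l w); exists n; exact: ltW.
  apply: contrapT => hS.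
  have allS : forall a, S l a.
    move=> a; apply: contrapT => nSa; apply: hS; exists a => s Ss.
    apply: contrapT => /negP; rewrite -ltNge => sa; apply: nSa; exact: (Sup l s a (ltW sa) Ss).
  have [l' [s [l'l Hs Ls]]] := NE l.
  have ll' : l != l' by rewrite eq_sym.
  apply: Hs.
  apply: (nulS P _ _ _ (nul_bigcup P _ (fun n => UG l l' ll' (- n%:R) s (allS _) Ls))) => w hw.
  by have [n hn] := arch (- Y l w); exists n; split => //; rewrite ltrNl.
exists (fun l => inf (S l)); split.
  move=> l; apply: (nulS P _ (fun w => exists n, Y l w <= inf (S l) - epsn n)).
    move=> w hw.
    have [n hn] : exists n, epsn n < inf (S l) - Y l w by apply: epsn_small; rewrite subr_gt0.
    by exists n; lra.
  apply: nul_bigcup => n; apply: contrapT => hn.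
  have := ge_inf (proj2 (hinf l)) hn.
  have := @epsn_gt0 R n; lra.
move=> l l' ll'.
have Lo : forall l0 n, ~ nul (fun w => Y l0 w <= inf (S l0) + epsn n).
  move=> l0 n; have [s Ss hs] := inf_adherent (@epsn_gt0 R n) (hinf l0).
  exact: (Sup l0 s _ (ltW hs) Ss).
apply: (nulS P _ (fun w => exists n, inf (S l) + epsn n < Y l w /\ inf (S l') + epsn n < Y l' w)).
  move=> w [h1 h2].
  have [n hn] : exists n, epsn n < Num.min (Y l w - inf (S l)) (Y l' w - inf (S l')).
    by apply: epsn_small; rewrite lt_min !subr_gt0 h1 h2.
  by exists n; move: hn; rewrite lt_min => /andP [hn1 hn2]; split; lra.
apply: nul_bigcup => n; exact: (UG l l' ll' _ _ (Lo l n) (Lo l' n)).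
Qed.

End Mlem.
Section final.
Context {dT : measure_display} {T : measurableType dT} {R : realType}.
Variable P : probability T R.
Local Notation nul := (nul P).

Lemma nul_transfer (U V : T -> R) (B : set R) : measurable_fun setT U -> measurable_fun setT V ->
  measurable B -> P (U @^-1` B) = P (V @^-1` B) ->
  nul (fun w => B (U w)) -> nul (fun w => B (V w)).
Proof.
move=> mU mV mB e hU.
have mUB : measurable (U @^-1` B) by rewrite -[U @^-1` _]setTI; exact: mU.
have mVB : measurable (V @^-1` B) by rewrite -[V @^-1` _]setTI; exact: mV.
apply/(nulP P _ mVB); rewrite -e; exact/(nulP P _ mUB).
Qed.

Lemma nul_lt_transfer (U V : T -> R) a : measurable_fun setT U -> measurable_fun setT V ->
  (forall B, measurable B -> P (U @^-1` B) = P (V @^-1` B)) ->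
  nul (fun w => U w < a) -> nul (fun w => V w < a).
Proof.
move=> mU mV marg h.
have := nul_transfer U V `]-oo, a[ mU mV (measurable_itv _) (marg _ (measurable_itv _)).
move=> /(_ _) H; apply: (nulS P _ _ _ (H _)).
  by move=> w /=; rewrite in_itv /=.
by apply: (nulS P _ _ _ h) => w /=; rewrite in_itv /=.
Qed.

Lemma nul_gt_transfer (U V : T -> R) a : measurable_fun setT U -> measurable_fun setT V ->
  (forall B, measurable B -> P (U @^-1` B) = P (V @^-1` B)) ->
  nul (fun w => a < U w) -> nul (fun w => a < V w).
Proof.
move=> mU mV marg h.
have := nul_transfer U V `]a, +oo[ mU mV (measurable_itv _) (marg _ (measurable_itv _)).
move=> /(_ _) H; apply: (nulS P _ _ _ (H _)).
  by move=> w /=; rewrite in_itv /= andbT.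
by apply: (nulS P _ _ _ h) => w /=; rewrite in_itv /= andbT.
Qed.

Lemma fromU {d : nat} (Y : 'I_d -> T -> R) (D : Dprop P Y) (inT : pred 'I_d) (t : 'I_d -> R)
  (pick2 : forall l l', exists y, [/\ inT y, y != l & y != l'])
  (ht : forall x, inT x -> ~ nul (fun w => t x < Y x w) /\ ~ nul (fun w => Y x w <= t x))
  (hU : forall x y, inT x -> inT y -> x != y -> nul (fun w => t x < Y x w /\ t y < Y y w)) :
  exists m : 'I_d -> R,
    {ae P, forall w, forall l l', l != l' -> Y l w = m l \/ Y l' w = m l'} /\
    (forall l, nul (fun w => Y l w < m l)).
Proof.
have UG := Uglobal P Y D inT t pick2 ht hU.
have NE : forall l, exists l' s, [/\ l' != l, ~ nul (fun w => s < Y l' w) &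
     ~ nul (fun w => Y l' w <= s)].
  move=> l; have [y [Ty yl _]] := pick2 l l; have [H L] := ht y Ty.
  by exists y, (t y); split.
have [m [h1 h2]] := Mlemma P Y UG NE.
exists m; split => //.
have A1 : {ae P, forall w, forall l, ~ (Y l w < m l)}.
  by apply: filter_forall => l; exact: h1.
have A2 : {ae P, forall w, forall l l', l != l' -> ~ (m l < Y l w /\ m l' < Y l' w)}.
  apply: filter_forall => l; apply: filter_forall => l'.
  have [ll'|] := boolP (l != l').
    by move: (h2 l l' ll'); rewrite /nul => h; apply: filterS h => w h' _.
  by move=> nll'; apply: aeW => w h; exfalso; move/negP: nll'; apply.
apply: filterS2 A1 A2 => w a1 a2 l l' ll'.
have b1 := a1 l; have b2 := a1 l'; have b3 := a2 l l' ll'.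
case: (ltgtP (Y l w) (m l)) => e1; [by exfalso| |by left].
case: (ltgtP (Y l' w) (m l')) => e2; [by exfalso| |by right].
by exfalso; apply: b3.
Qed.

Lemma struct_final {d : nat} (Y X : 'I_d -> T -> R)
  (mY : forall i, measurable_fun setT (Y i)) (mX : forall i, measurable_fun setT (X i))
  (marg : forall i B, measurable B -> P (Y i @^-1` B) = P (X i @^-1` B))
  (cm : countermonotonic P Y) (i j k : 'I_d) (ij : i != j) (jk : j != k) (ik : i != k)
  (ndi : nondegenerate_rv P (Y i)) (ndj : nondegenerate_rv P (Y j))
  (ndk : nondegenerate_rv P (Y k)) :
  exists m : 'I_d -> R,
    {ae P, forall w, forall l l', l != l' -> Y l w = m l \/ Y l' w = m l'} /\
    {ae P, forall w, (forall l, m l <= X l w) \/ (forall l, X l w <= m l)}.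
Proof.
have [D Dn] := D_of_cm P Y cm.
have margX : forall l B, measurable B -> P (X l @^-1` B) = P (Y l @^-1` B).
  by move=> l B mB; rewrite marg.
set inT : pred 'I_d := [pred x | (x == i) || (x == j) || (x == k)].
have pick2 : forall l l', exists y, [/\ inT y, y != l & y != l'].
  move=> l l'.
  have [[il il']|] := pselect (i != l /\ i != l').
    by exists i; split => //; rewrite /inT /= eqxx.
  move=> hi.
  have [[jl jl']|] := pselect (j != l /\ j != l').
    by exists j; split => //; rewrite /inT /= eqxx orbT.
  move=> hj.
  exists k; split; first by rewrite /inT /= eqxx !orbT.
  - apply/eqP => kl; subst l.
    have il' : i = l'.
      apply/eqP; apply: contrapT => /negP il'; apply: hi; split => //; by rewrite eq_sym.
    have jl' : j = l'.
      apply/eqP; apply: contrapT => /negP jl'; apply: hj; split => //; by rewrite eq_sym.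
    by move: ij; rewrite il' jl' eqxx.
  - apply/eqP => kl'; subst l'.
    have il : i = l.
      apply/eqP; apply: contrapT => /negP il; apply: hi; split => //; by rewrite eq_sym.
    have jl : j = l.
      apply/eqP; apply: contrapT => /negP jl; apply: hj; split => //; by rewrite eq_sym.
    by move: ij; rewrite il jl eqxx.
have [ti [Hi1 Hi2]] := ND P (Y i) (mY i) ndi.
have [tj [Hj1 Hj2]] := ND P (Y j) (mY j) ndj.
have [tk [Hk1 Hk2]] := ND P (Y k) (mY k) ndk.
have LoS : forall l t, ~ nul (fun w => Y l w < t) -> ~ nul (fun w => Y l w <= t).
  move=> l t h n; apply: h; apply: (nulS P _ _ _ n) => w; exact: ltW.
have HiS : forall l t, ~ nul (fun w => t < Y l w) -> ~ nul (fun w => t <= Y l w).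
  move=> l t h n; apply: h; apply: (nulS P _ _ _ n) => w; exact: ltW.
pose t x := if x == i then ti else if x == j then tj else tk.
have tE : forall x, inT x -> [\/ x = i /\ t x = ti, x = j /\ t x = tj | x = k /\ t x = tk].
  move=> x; rewrite /inT /= /t.
  case: (eqVneq x i) => [->|xi]; first by move=> _; apply: Or31.
  case: (eqVneq x j) => [->|xj]; first by move=> _; apply: Or32.
  by rewrite /= => /eqP ->; apply: Or33.
have ji : j != i by rewrite eq_sym.
have ki : k != i by rewrite eq_sym.
have kj : k != j by rewrite eq_sym.
have [[Uij Uik Ujk]|[Lij Lik Ljk]] :=
  triple_case P Y D i j k ij ik jk ti tj tk Hi2 (LoS _ _ Hi1) Hj2 (LoS _ _ Hj1) Hk2 (LoS _ _ Hk1).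
  have ht : forall x, inT x -> ~ nul (fun w => t x < Y x w) /\ ~ nul (fun w => Y x w <= t x).
    move=> x /tE [[-> ->]|[-> ->]|[-> ->]]; split => //; exact: LoS.
  have hU : forall x y, inT x -> inT y -> x != y -> nul (fun w => t x < Y x w /\ t y < Y y w).
    move=> x y /tE [[-> ->]|[-> ->]|[-> ->]] /tE [[-> ->]|[-> ->]|[-> ->]];
      rewrite ?eqxx // => _; try exact: nul_andC.
    all: try first [exact: Uij | exact: Uik | exact: Ujk | exact: (nul_andC P _ _ Uij)
              | exact: (nul_andC P _ _ Uik) | exact: (nul_andC P _ _ Ujk)].
  have [m [HY h1]] := fromU Y D inT t pick2 ht hU.
  exists m; split => //.
  have HX : {ae P, forall w, forall l, m l <= X l w}.
    apply: filter_forall => l.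
    have := nul_lt_transfer (Y l) (X l) (m l) (mY l) (mX l) (marg l) (h1 l).
    by rewrite /nul; apply: filterS => w h; rewrite leNgt; apply/negP.
  by apply: filterS HX => w h; left.
pose Yn := fun l w => - Y l w.
pose tn := fun x => - t x.
have ht : forall x, inT x -> ~ nul (fun w => tn x < Yn x w) /\ ~ nul (fun w => Yn x w <= tn x).
  move=> x Tx; rewrite /tn /Yn; split.
    case/tE: Tx => [[-> ->]|[-> ->]|[-> ->]] n.
    + apply: Hi1; apply: (nulS P _ _ _ n) => w; rewrite ltrN2; by move=> hh.
    + apply: Hj1; apply: (nulS P _ _ _ n) => w; rewrite ltrN2; by move=> hh.
    + apply: Hk1; apply: (nulS P _ _ _ n) => w; rewrite ltrN2; by move=> hh.
  case/tE: Tx => [[-> ->]|[-> ->]|[-> ->]] n.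
  + apply: Hi2; apply: (nulS P _ _ _ n) => w h; rewrite lerN2; exact: ltW.
  + apply: Hj2; apply: (nulS P _ _ _ n) => w h; rewrite lerN2; exact: ltW.
  + apply: Hk2; apply: (nulS P _ _ _ n) => w h; rewrite lerN2; exact: ltW.
have hU : forall x y, inT x -> inT y -> x != y -> nul (fun w => tn x < Yn x w /\ tn y < Yn y w).
  have conv : forall x y, nul (fun w => Y x w <= t x /\ Y y w <= t y) ->
      nul (fun w => tn x < Yn x w /\ tn y < Yn y w).
    move=> x y h; apply: (nulS P _ _ _ h) => w /=; rewrite /tn /Yn !ltrN2 => -[h1 h2].
    by split; exact: ltW.
  move=> x y Tx Ty xy; apply: conv; move: Tx Ty xy.
  move=> /tE [[-> ->]|[-> ->]|[-> ->]] /tE [[-> ->]|[-> ->]|[-> ->]]; rewrite ?eqxx // => _.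
  all: try first [exact: Lij | exact: Lik | exact: Ljk | exact: (nul_andC P _ _ Lij)
            | exact: (nul_andC P _ _ Lik) | exact: (nul_andC P _ _ Ljk)].
have Dn' : Dprop P Yn by exact: Dn.
have [m' [HY h1]] := fromU Yn Dn' inT tn pick2 ht hU.
exists (fun l => - m' l); split.
  apply: filterS HY => w h l l' ll'.
  by case: (h l l' ll') => e; [left|right]; rewrite -e /Yn opprK.
have HX : {ae P, forall w, forall l, X l w <= - m' l}.
  apply: filter_forall => l.
  have h1' : nul (fun w => - m' l < Y l w).
    by apply: (nulS P _ _ _ (h1 l)) => w; rewrite /Yn ltrNl.
  have := nul_gt_transfer (Y l) (X l) (- m' l) (mY l) (mX l) (marg l) h1'.
  by rewrite /nul; apply: filterS => w h; rewrite leNgt; apply/negP.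
by apply: filterS HX => w h; right.
Qed.

End final.

Theorem theorem7 (dT : measure_display) (T : measurableType dT) (R : realType)
  (P : probability T R) (d : nat) (X Xct : 'I_d -> {RV P >-> R}) :
  (3 <= d)%N ->
  atomless P ->
  (exists i j k : 'I_d, [/\ i != j, j != k, i != k &
     [/\ nondegenerate_rv P (X i), nondegenerate_rv P (X j) & nondegenerate_rv P (X k)]]) ->
  countermonotonic P (fun i => (Xct i : T -> R)) ->
  same_marginals P (fun i => (Xct i : T -> R)) (fun i => (X i : T -> R)) ->
  sm_le P (fun i => (Xct i : T -> R)) (fun i => (X i : T -> R)).
Proof.
move=> _ _ [i [j [k [ij jk ik [ndi ndj ndk]]]]] cm marg.
pose Yf := fun i => (Xct i : T -> R).
pose Xf := fun i => (X i : T -> R).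
have mY : forall i, measurable_fun setT (Yf i) by move=> l; exact: measurable_funPT.
have mX : forall i, measurable_fun setT (Xf i) by move=> l; exact: measurable_funPT.
have ndT : forall l, nondegenerate_rv P (Xf l) -> nondegenerate_rv P (Yf l).
  move=> l nd [c hc]; apply: nd; exists c.
  have := marg l [set c] (measurable_set1 c); rewrite /= => e.
  by rewrite -hc; exact: (esym e).
have [m [HY HX]] := struct_final P Yf Xf mY mX marg cm i j k ij jk ik
  (ndT _ ndi) (ndT _ ndj) (ndT _ ndk).
move=> phi mphi hsm wdY _.
exact: (main_ineq P phi m Xf Yf mphi hsm mX mY marg HY HX wdY).
Qed.
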